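(* Let $m,n\ge 0$ with $m+n\ge 3$. Then the surjective homomorphism of Leibniz superalgebras $\psi:\mathfrak{stl}(m,n,\mathcal A)\to\mathfrak{sl}(m,n,\mathcal A)$, $\psi(v_{ij}(a))=E_{ij}(a)$, is a central extension; that is, $[t,x]=[x,t]=0$ for all $t\in\operatorname{Ker}\psi$ and all $x\in\mathfrak{stl}(m,n,\mathcal A)$.
   Context: Standing assumptions: $K$ is a field with $\operatorname{char}K\ne 2,3$, and $\mathcal A$ is an associative unital $K$-algebra. A Leibniz superalgebra is a $\mathbb Z_2$-graded $K$-vector space $L=L_0\oplus L_1$ with a bilinear bracket satisfying $[L_\sigma,L_{\sigma'}]\subseteq L_{\sigma+\sigma'}$ and $[[a,b],c]=[a,[b,c]]-(-1)^{|a||b|}[b,[a,c]]$ for homogeneous $a,b,c$. Every Lie superalgebra is a Leibniz superalgebra. For $1\le i,j\le m+n$ put $\tau_{ij}=0$ if $i,j\le m$ or $i,j\ge m+1$, and $\tau_{ij}=1$ otherwise. $\mathfrak{gl}(m,n,\mathcal A)$ is the Lie superalgebra of $(m+n)\times(m+n)$ matrices over $\mathcal A$, where the matrix unit $E_{ij}(a)$ (entry $a$ in position $(i,j)$, zeros elsewhere) has degree $\tau_{ij}$, with bracket $[X,Y]=XY-(-1)^{\alpha\beta}YX$ for $X$ of degree $\alpha$, $Y$ of degree $\beta$. $\mathfrak{sl}(m,n,\mathcal A)$ is the subsuperalgebra generated by all $E_{ij}(a)$ with $i\ne j$, $a\in\mathcal A$ (the derived algebra of $\mathfrak{gl}(m,n,\mathcal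 A)$). The Steinberg Leibniz superalgebra $\mathfrak{stl}(m,n,\mathcal A)$ is the Leibniz superalgebra generated by symbols $v_{ij}(a)$, $1\le i\ne j\le m+n$, $a\in\mathcal A$, with $v_{ij}(a)$ of degree $\tau_{ij}$, subject to: (1) $v_{ij}$ is $K$-linear in $a$; (2) $[v_{ij}(a),v_{kl}(b)]=0$ if $i\ne l$ and $j\ne k$; (3) $[v_{ij}(a),v_{kl}(b)]=v_{il}(ab)$ if $i\ne l$, $j=k$; (4) $[v_{ij}(a),v_{kl}(b)]=-(-1)^{\tau_{ij}\tau_{kl}}v_{kj}(ba)$ if $i=l$, $j\ne k$. *)

(* Defs.v *)
From HB Require Import structures.
From mathcomp Require Import all_boot all_order all_algebra.
Set Implicit Arguments. Unset Strict Implicit. Unset Printing Implicit Defensive.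
Import GRing.Theory.
Local Open Scope ring_scope.

Section LeibnizSuper.
Variables (K : fieldType) (L : lmodType K).

(* A Z_2-grading of L: G false = L_0, G true = L_1, two subspaces whose
   direct sum is L. *)
Definition is_Z2grading (G : bool -> L -> Prop) : Prop :=
  (forall s, G s 0 /\ forall (c : K) x y, G s x -> G s y -> G s (c *: x + y)) /\
  (forall x, exists x0 x1, [/\ G false x0, G true x1 & x = x0 + x1]) /\
  (forall x, G false x -> G true x -> x = 0).

Definition is_leibniz_superalgebra (G : bool -> L -> Prop) (br : L -> L -> L)
  : Prop :=
  [/\ is_Z2grading G,
      (forall (c : K) x y z, br (c *: x + y) z = c *: br x z + br y z),
      (forall (c : K) x y z, br z (c *: x + y) = c *: br z x + br z y),
      (forall s t x y, G s x -> G t y -> G (s (+) t) (br x y)) &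
      (forall s t u a b c, G s a -> G t b -> G u c ->
         br (br a b) c = br a (br b c) - ((-1) ^+ (s && t)) *: br b (br a c))].

Definition generated_by (br : L -> L -> L) (gen : L -> Prop) : Prop :=
  forall P : L -> Prop,
    P 0 -> (forall (c : K) x y, P x -> P y -> P (c *: x + y)) ->
    (forall x y, P x -> P y -> P (br x y)) ->
    (forall x, gen x -> P x) -> forall x, P x.
End LeibnizSuper.

Section GL.
Variables (K : fieldType) (A : algType K) (m n : nat).

Definition idx_par (i : 'I_(m + n)) : bool := (m <= i)%N.
Definition tau (i j : 'I_(m + n)) : bool := idx_par i (+) idx_par j.

Definition Emx (i j : 'I_(m + n)) (a : A) : 'M[A]_(m + n) :=
  \matrix_(k, l) (if (k == i) && (l == j) then a else 0).

Definition mx_part (s : bool) (X : 'M[A]_(m + n)) : 'M[A]_(m + n) :=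
  \matrix_(k, l) (if tau k l == s then X k l else 0).

Definition mx_homog (s : bool) (X : 'M[A]_(m + n)) : Prop := mx_part s X = X.

Definition mx_scale (c : K) (X : 'M[A]_(m + n)) : 'M[A]_(m + n) :=
  map_mx (fun a => c *: a) X.

(* super bracket on gl(m,n,A): bilinear extension of
   [X,Y] = XY - (-1)^(|X||Y|) YX for homogeneous X, Y *)
Definition glbr (X Y : 'M[A]_(m + n)) : 'M[A]_(m + n) :=
  \sum_(s : bool) \sum_(t : bool)
    (mx_part s X *m mx_part t Y
     - ((-1) ^+ (s && t)) *: (mx_part t Y *m mx_part s X)).
End GL.

(* Main.v *)
Require Import Defs.
From HB Require Import structures.
From mathcomp Require Import all_boot all_order all_algebra.
Import GRing.Theory.
Local Open Scope ring_scope.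

Section LinGen.
Variables (K : fieldType) (M N : lmodType K) (f : M -> N).
Hypothesis hf : forall (c : K) x y, f (c *: x + y) = c *: f x + f y.
Lemma lf0 : f 0 = 0.
Proof.
have h := hf 1 0 0; rewrite scaler0 addr0 scale1r in h.
by apply: (addrI (f 0)); rewrite addr0 -h.
Qed.
Lemma lfD x y : f (x + y) = f x + f y.
Proof. by have := hf 1 x y; rewrite !scale1r. Qed.
Lemma lfZ c x : f (c *: x) = c *: f x.
Proof. by have := hf c x 0; rewrite !addr0 lf0 addr0. Qed.
Lemma lfN x : f (- x) = - f x.
Proof. by rewrite -scaleN1r lfZ scaleN1r. Qed.
Lemma lfB x y : f (x - y) = f x - f y.
Proof. by rewrite lfD lfN. Qed.
Lemma lf_sum (I : Type) (r : seq I) (P : pred I) (F : I -> M) :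
  f (\sum_(i <- r | P i) F i) = \sum_(i <- r | P i) f (F i).
Proof. exact: (big_morph f lfD lf0). Qed.
End LinGen.

Section Main.
Variables (K : fieldType) (A : algType K) (m n : nat)
  (L : lmodType K) (G : bool -> L -> Prop) (br : L -> L -> L)
  (v : 'I_(m + n) -> 'I_(m + n) -> A -> L)
  (psi : L -> 'M[A]_(m + n)).
Hypothesis H3 : (3 <= m + n)%N.
Hypothesis HL : is_leibniz_superalgebra G br.
Hypothesis Hdeg : forall i j a, i != j -> G (tau i j) (v i j a).
Hypothesis Hvlin : forall i j (c : K) a b, i != j -> v i j (c *: a + b) = c *: v i j a + v i j b.
Hypothesis R2 : forall i j k l a b, i != j -> k != l -> i != l -> j != k ->
     br (v i j a) (v k l b) = 0.
Hypothesis R3 : forall i j l a b, i != j -> j != l -> i != l ->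
     br (v i j a) (v j l b) = v i l (a * b).
Hypothesis R4 : forall i j k a b, i != j -> k != i -> j != k ->
     br (v i j a) (v k i b) = - (((-1) ^+ (tau i j && tau k i)) *: v k j (b * a)).
Hypothesis Hgen : generated_by br (fun x => exists i j a, i != j /\ x = v i j a).
Hypothesis Hpsilin : forall (c : K) x y, psi (c *: x + y) = mx_scale c (psi x) + psi y.
Hypothesis Hpsibr : forall x y, psi (br x y) = glbr (psi x) (psi y).
Hypothesis Hpsihom : forall s x, G s x -> mx_homog s (psi x).
Hypothesis Hpsiv : forall i j a, i != j -> psi (v i j a) = Emx i j a.

Lemma brL z c x y : br (c *: x + y) z = c *: br x z + br y z.
Proof. by case: HL => _ h _ _ _; apply: h. Qed.
Lemma brR z c x y : br z (c *: x + y) = c *: br z x + br z y.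
Proof. by case: HL => _ _ h _ _; apply: h. Qed.
Lemma brdeg {s t x y} : G s x -> G t y -> G (s (+) t) (br x y).
Proof. by case: HL => _ _ _ h _; apply: h. Qed.
Lemma jac {s t u a b c} : G s a -> G t b -> G u c ->
  br (br a b) c = br a (br b c) - ((-1) ^+ (s && t)) *: br b (br a c).
Proof. by case: HL => _ _ _ _ h; apply: h. Qed.
Lemma jacD {s t u a b c} : G s a -> G t b -> G u c ->
  br a (br b c) = br (br a b) c + ((-1) ^+ (s && t)) *: br b (br a c).
Proof. by move=> ga gb gc; rewrite (jac ga gb gc) subrK. Qed.

Lemma br0l z : br 0 z = 0. Proof. exact: (@lf0 _ _ _ (fun x => br x z) (brL z)). Qed.
Lemma br0r z : br z 0 = 0. Proof. exact: (@lf0 _ _ _ (br z) (brR z)). Qed.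
Lemma brDl z x y : br (x + y) z = br x z + br y z. Proof. exact: (@lfD _ _ _ (fun x => br x z) (brL z)). Qed.
Lemma brDr z x y : br z (x + y) = br z x + br z y. Proof. exact: (@lfD _ _ _ (br z) (brR z)). Qed.
Lemma brZl z c x : br (c *: x) z = c *: br x z. Proof. exact: (@lfZ _ _ _ (fun x => br x z) (brL z)). Qed.
Lemma brZr z c x : br z (c *: x) = c *: br z x. Proof. exact: (@lfZ _ _ _ (br z) (brR z)). Qed.
Lemma brNl z x : br (- x) z = - br x z. Proof. exact: (@lfN _ _ _ (fun x => br x z) (brL z)). Qed.
Lemma brNr z x : br z (- x) = - br z x. Proof. exact: (@lfN _ _ _ (br z) (brR z)). Qed.
Lemma brBl z x y : br (x - y) z = br x z - br y z. Proof. exact: (@lfB _ _ _ (fun x => br x z) (brL z)). Qed.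
Lemma brBr z x y : br z (x - y) = br z x - br z y. Proof. exact: (@lfB _ _ _ (br z) (brR z)). Qed.
Lemma br_sumL z (I : Type) (r : seq I) (P : pred I) F :
  br (\sum_(i <- r | P i) F i) z = \sum_(i <- r | P i) br (F i) z.
Proof. exact: (@lf_sum _ _ _ (fun x => br x z) (brL z)). Qed.
Lemma br_sumR z (I : Type) (r : seq I) (P : pred I) F :
  br z (\sum_(i <- r | P i) F i) = \sum_(i <- r | P i) br z (F i).
Proof. exact: (@lf_sum _ _ _ (br z) (brR z)). Qed.

Lemma v0 i j : i != j -> v i j 0 = 0.
Proof. move=> h; exact: (@lf0 _ _ _ (v i j) (fun c a b => Hvlin i j c a b h)). Qed.
Lemma vD i j a b : i != j -> v i j (a + b) = v i j a + v i j b.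
Proof. move=> h; exact: (@lfD _ _ _ (v i j) (fun c a b => Hvlin i j c a b h)). Qed.
Lemma vZ i j c a : i != j -> v i j (c *: a) = c *: v i j a.
Proof. move=> h; exact: (@lfZ _ _ _ (v i j) (fun c a b => Hvlin i j c a b h)). Qed.
Lemma vN i j a : i != j -> v i j (- a) = - v i j a.
Proof. move=> h; exact: (@lfN _ _ _ (v i j) (fun c a b => Hvlin i j c a b h)). Qed.

Lemma G0 s : G s 0. Proof. by case: HL => [[h _] _ _ _ _]; case: (h s). Qed.
Lemma Glin {s} c {x y} : G s x -> G s y -> G s (c *: x + y).
Proof. by case: HL => [[h _] _ _ _ _]; case: (h s) => _; apply. Qed.
Lemma Gdec x : exists x0 x1, [/\ G false x0, G true x1 & x = x0 + x1].
Proof. by case: HL => [[_ [h _]] _ _ _ _]. Qed.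
Lemma Gz {x} : G false x -> G true x -> x = 0.
Proof. by case: HL => [[_ [_ h]] _ _ _ _]; apply: h. Qed.
Lemma GD {s x y} : G s x -> G s y -> G s (x + y).
Proof. by move=> a b; have := Glin 1 a b; rewrite scale1r. Qed.
Lemma GZ {s} c {x} : G s x -> G s (c *: x).
Proof. by move=> a; have := Glin c a (G0 s); rewrite addr0. Qed.
Lemma GN {s x} : G s x -> G s (- x).
Proof. by move=> a; rewrite -scaleN1r; apply: GZ. Qed.
Lemma GB {s x y} : G s x -> G s y -> G s (x - y).
Proof. by move=> a b; apply: GD a (GN b). Qed.

Lemma Guniq a b a' b' : G false a -> G true b -> G false a' -> G true b' ->
  a + b = a' + b' -> a = a' /\ b = b'.
Proof.
move=> ga gb ga' gb' e.
have e2 : a - a' = b' - b.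
  by apply/eqP; rewrite subr_eq addrAC [b' + a']addrC -e addrK.
have z : a - a' = 0 by apply: Gz; [apply: GB | rewrite e2; apply: GB].
split; first by apply/eqP; rewrite -subr_eq0 z.
by apply/eqP; rewrite eq_sym -subr_eq0 -e2 z.
Qed.


Lemma mx_scale1 (X : 'M[A]_(m+n)) : mx_scale 1 X = X.
Proof. by apply/matrixP => i j; rewrite /mx_scale mxE scale1r. Qed.
Lemma psiD x y : psi (x + y) = psi x + psi y.
Proof. by have := Hpsilin 1 x y; rewrite scale1r mx_scale1. Qed.
Lemma psi0 : psi 0 = 0.
Proof. have h := psiD 0 0; rewrite addr0 in h. by apply: (addrI (psi 0)); rewrite addr0 -h. Qed.
Lemma psiE c x y i j : psi (c *: x + y) i j = c *: psi x i j + psi y i j.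
Proof. by rewrite Hpsilin /mx_scale !mxE. Qed.

Definition diag (X : 'M[A]_(m+n)) := forall i j, i != j -> X i j = 0.
Lemma diag0 : diag 0. Proof. by move=> i j _; rewrite mxE. Qed.
Lemma diagD X Y : diag X -> diag Y -> diag (X + Y).
Proof. by move=> hX hY i j h; rewrite mxE hX // hY // addr0. Qed.
Lemma diagN X : diag X -> diag (- X).
Proof. by move=> hX i j h; rewrite mxE hX // oppr0. Qed.
Lemma diagB X Y : diag X -> diag Y -> diag (X - Y).
Proof. by move=> hX hY; apply: diagD => //; apply: diagN. Qed.
Lemma diagZ (c : A) X : diag X -> diag (c *: X).
Proof. by move=> hX i j h; rewrite mxE hX // mulr0. Qed.
Lemma diag_part s X : diag X -> diag (mx_part s X).
Proof. by move=> hX i j h; rewrite mxE hX //; case: ifP. Qed.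
Lemma diag_mul X Y : diag X -> diag Y -> diag (X *m Y).
Proof.
move=> hX hY i j hij; rewrite mxE; apply: big1 => k _.
case: (eqVneq k i) => [->|hk]; first by rewrite hY // mulr0.
by rewrite hX ?mul0r // eq_sym.
Qed.
Definition rsupp (X : 'M[A]_(m+n)) r := forall k p, k != r -> X k p = 0.
Definition csupp (X : 'M[A]_(m+n)) r := forall p l, l != r -> X p l = 0.
Lemma rsupp_part s X r : rsupp X r -> rsupp (mx_part s X) r.
Proof. by move=> h k p hk; rewrite mxE h //; case: ifP. Qed.
Lemma csupp_part s X r : csupp X r -> csupp (mx_part s X) r.
Proof. by move=> h k p hk; rewrite mxE h //; case: ifP. Qed.
Lemma rsupp_E i j a : rsupp (Emx i j a) i.
Proof. by move=> k p hk; rewrite mxE (negbTE hk). Qed.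
Lemma csupp_E i j a : csupp (Emx i j a) j.
Proof. by move=> k p hk; rewrite mxE (negbTE hk) andbF. Qed.
Lemma diag_mulrc X Y r : rsupp X r -> csupp Y r -> diag (X *m Y).
Proof.
move=> hX hY i j hij; rewrite mxE; apply: big1 => k _.
case: (eqVneq i r) => [e|hi]; last by rewrite hX // mul0r.
by rewrite hY ?mulr0 // -e eq_sym.
Qed.
Lemma diag_sum (I : finType) (F : I -> 'M[A]_(m+n)) :
  (forall i, diag (F i)) -> diag (\sum_i F i).
Proof. by move=> h; apply: big_ind; [exact: diag0 | exact: diagD | move=> i _; exact: h]. Qed.
Lemma diag_glbr X Y : (forall s t, diag (mx_part s X *m mx_part t Y)) ->
  (forall s t, diag (mx_part t Y *m mx_part s X)) -> diag (glbr X Y).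
Proof.
move=> h1 h2; apply: diag_sum => s; apply: diag_sum => t.
by apply: diagB; [apply: h1 | apply: diagZ; apply: h2].
Qed.
Lemma part0 s : mx_part s (0 : 'M[A]_(m+n)) = 0.
Proof. by apply/matrixP => i j; rewrite !mxE; case: ifP. Qed.
Lemma glbr0l (Y : 'M[A]_(m+n)) : glbr 0 Y = 0.
Proof.
rewrite /glbr; apply: big1 => s _; apply: big1 => t _.
by rewrite part0 mul0mx mulmx0 scaler0 subr0.
Qed.
Lemma glbr0r (X : 'M[A]_(m+n)) : glbr X 0 = 0.
Proof.
rewrite /glbr; apply: big1 => s _; apply: big1 => t _.
by rewrite part0 mul0mx mulmx0 scaler0 subr0.
Qed.

Definition U (X : 'M[A]_(m+n)) : L :=
  \sum_(p : 'I_(m+n) * 'I_(m+n) | p.1 != p.2) v p.1 p.2 (X p.1 p.2).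
Lemma U_lin c X Y : U (mx_scale c X + Y) = c *: U X + U Y.
Proof.
rewrite /U scaler_sumr -big_split; apply: eq_bigr => p hp /=.
by rewrite /mx_scale !mxE Hvlin.
Qed.
Lemma U_diag X : diag X -> U X = 0.
Proof. by move=> h; apply: big1 => p hp; rewrite h // v0. Qed.
Lemma U_E i j a : i != j -> U (Emx i j a) = v i j a.
Proof.
move=> hij; rewrite /U (bigD1 (i, j)) //= big1 ?addr0; first by rewrite mxE !eqxx.
case=> k l /= /andP[hkl hne]; rewrite mxE.
case: ifP => [/andP[/eqP ek /eqP el]|_]; last exact: v0.
by move: hne; rewrite ek el eqxx.
Qed.

Definition inV k l x := exists d, x = v k l d.
Lemma inV_v k l d : inV k l (v k l d). Proof. by exists d. Qed.
Lemma inV0 k l : k != l -> inV k l 0. Proof. by move=> h; exists 0; rewrite v0. Qed.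
Lemma inVD k l x y : k != l -> inV k l x -> inV k l y -> inV k l (x + y).
Proof. by move=> h [d ->] [e ->]; exists (d + e); rewrite vD. Qed.
Lemma inVZ k l c x : k != l -> inV k l x -> inV k l (c *: x).
Proof. by move=> h [d ->]; exists (c *: d); rewrite vZ. Qed.
Lemma inVN k l x : k != l -> inV k l x -> inV k l (- x).
Proof. by move=> h [d ->]; exists (- d); rewrite vN. Qed.
Lemma inVB k l x y : k != l -> inV k l x -> inV k l y -> inV k l (x - y).
Proof. by move=> h a b; apply: inVD => //; apply: inVN. Qed.


Arguments inV0 {k l}. Arguments inVD {k l x y}. Arguments inVZ {k l c x}.
Arguments inVN {k l x}. Arguments inVB {k l x y}. Arguments Guniq {a b a' b'}.

Ltac solveV h := repeat first [ apply: (inV0 h) | apply: inV_v | apply: (inVD h)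
  | apply: (inVB h) | apply: (inVN h) | apply: (inVZ h) ].

Ltac symneq := repeat match goal with
 | H : is_true (?x != ?y) |- _ =>
   assert_fails (assert (is_true (y != x)) by assumption);
   let H' := fresh "hs" in have H' : y != x by rewrite eq_sym
 end.

Lemma norm1 i j a b k l c : i != j -> k != l ->
  ~~ ((k == i) && (l == j)) -> ~~ ((k == j) && (l == i)) ->
  inV k l (br (br (v i j a) (v j i b)) (v k l c)) /\
  inV k l (br (v k l c) (br (v i j a) (v j i b))).
Proof.
move=> hij hkl n1 n2.
have hji : j != i by rewrite eq_sym.
have gx := Hdeg i j a hij; have gy := Hdeg j i b hji; have gz := Hdeg k l c hkl.
rewrite (jac gx gy gz) (jacD gz gx gy).
case: (eqVneq k i) => [ek|hki].
  subst k; rewrite eqxx /= in n1; symneq.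
  rewrite (R3 j i l) // (R3 i j l) // (R2 i j i l) // br0r scaler0 subr0.
  split; first exact: inV_v.
  rewrite (R2 i l i j) // br0l add0r (R4 i l j) // brNr brZr (R3 i j l) //.
  solveV hkl.
case: (eqVneq k j) => [ek|hkj].
  subst k; rewrite eqxx /= in n2; symneq.
  rewrite (R2 j i j l) // br0r (R3 i j l) // (R3 j i l) //.
  rewrite (R4 j l i) // brNl brZl (R4 i l j) // (R2 j l j i) // br0r.
  split; solveV hkl.
case: (eqVneq l i) => [el|hli].
  subst l; symneq.
  rewrite (R2 j i k i) // br0r (R4 i j k) // brNr brZr (R4 j i k) //.
  rewrite (R3 k i j) // (R3 k j i) // (R2 k i j i) // br0r.
  split; solveV hkl.
case: (eqVneq l j) => [el|hlj].
  subst l; symneq.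
  rewrite (R4 j i k) // brNr brZr (R4 i j k) // (R2 i j k j) // br0r.
  rewrite (R2 k j i j) // br0l (R3 k j i) // (R4 i j k) //.
  split; solveV hkl.
symneq.
rewrite (R2 j i k l) // (R2 i j k l) // (R2 k l i j) // (R2 k l j i) // !br0r !br0l.
split; solveV hkl.
Qed.

Lemma trickL y s k l p c : G s y -> k != l -> p != k -> p != l ->
  (forall c', inV k p (br y (v k p c'))) -> (forall c', inV p l (br y (v p l c'))) ->
  inV k l (br y (v k l c)).
Proof.
move=> gy hkl hpk hpl h1 h2; symneq.
have -> : v k l c = br (v k p c) (v p l 1) by rewrite R3 // mulr1.
rewrite (jacD gy (Hdeg k p c hs0) (Hdeg p l 1 hpl)).
have [d ->] := h1 c. have [e ->] := h2 1.
rewrite (R3 k p l) // (R3 k p l) //. solveV hkl.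
Qed.

Lemma trickR y s k l p c : G s y -> k != l -> p != k -> p != l ->
  (forall c', inV k p (br (v k p c') y)) -> (forall c', inV p l (br (v p l c') y)) ->
  inV k l (br (v k l c) y).
Proof.
move=> gy hkl hpk hpl h1 h2; symneq.
have -> : v k l c = br (v k p c) (v p l 1) by rewrite R3 // mulr1.
rewrite (jac (Hdeg k p c hs0) (Hdeg p l 1 hpl) gy).
have [d ->] := h2 1. have [e ->] := h1 c.
rewrite (R3 k p l) // (R4 p l k) //. solveV hkl.
Qed.

Lemma third k l : exists p : 'I_(m+n), (p != k) && (p != l).
Proof.
case: (pickP (fun p : 'I_(m+n) => (p != k) && (p != l))) => [p hp | h0]; first by exists p.
have : (#|'I_(m+n)| <= #|[:: k; l]|)%N.
  apply: subset_leq_card; apply/subsetP => p _.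
  move: (h0 p) => /= /negbT; rewrite negb_and !negbK !inE.
  by case/orP => ->; rewrite ?orbT.
rewrite card_ord => h; have h2 := leq_trans h (card_size _).
by have := leq_trans H3 h2.
Qed.


Definition Hh s y := [/\ G s y,
  (forall k l c, k != l -> inV k l (br y (v k l c)) /\ inV k l (br (v k l c) y))
  & diag (psi y)].

Lemma hij_Hh i j a b : i != j -> Hh false (br (v i j a) (v j i b)).
Proof.
move=> hij; have hji : j != i by rewrite eq_sym.
have gx := Hdeg i j a hij; have gy := Hdeg j i b hji.
have gX : G false (br (v i j a) (v j i b)).
  have gg := brdeg gx gy.
  have e : tau j i = tau i j by rewrite /tau addbC.
  by rewrite e addbb in gg.
split.
- exact: gX.
- move=> k l c hkl.
  case: (boolP (((k == i) && (l == j)) || ((k == j) && (l == i)))) => [hs | hn].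
  + have [p /andP[hpk hpl]] := third k l.
    case/orP: hs => /andP[/eqP ek /eqP el]; subst k l; symneq.
    * have N1 : forall c', inV i p (br (br (v i j a) (v j i b)) (v i p c')) /\
                          inV i p (br (v i p c') (br (v i j a) (v j i b))).
        move=> c'; apply: norm1 => //; by rewrite ?eqxx ?(negbTE hij) ?(negbTE hji) ?(negbTE hpk) ?(negbTE hpl).
      have N2 : forall c', inV p j (br (br (v i j a) (v j i b)) (v p j c')) /\
                          inV p j (br (v p j c') (br (v i j a) (v j i b))).
        move=> c'; apply: norm1 => //; by rewrite ?eqxx ?(negbTE hij) ?(negbTE hji) ?(negbTE hpk) ?(negbTE hpl) ?andbF.
      split; [apply: (trickL _ _ _ _ p _ gX) | apply: (trickR _ _ _ _ p _ gX)] => // c'.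
      all: try first [exact: (N1 c').1 | exact: (N1 c').2 | exact: (N2 c').1 | exact: (N2 c').2].
    * have N1 : forall c', inV j p (br (br (v i j a) (v j i b)) (v j p c')) /\
                          inV j p (br (v j p c') (br (v i j a) (v j i b))).
        move=> c'; apply: norm1 => //; by rewrite ?eqxx ?(negbTE hij) ?(negbTE hji) ?(negbTE hpk) ?(negbTE hpl) ?andbF.
      have N2 : forall c', inV p i (br (br (v i j a) (v j i b)) (v p i c')) /\
                          inV p i (br (v p i c') (br (v i j a) (v j i b))).
        move=> c'; apply: norm1 => //; by rewrite ?eqxx ?(negbTE hij) ?(negbTE hji) ?(negbTE hpk) ?(negbTE hpl) ?andbF.
      split; [apply: (trickL _ _ _ _ p _ gX) | apply: (trickR _ _ _ _ p _ gX)] => // c'.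
      all: try first [exact: (N1 c').1 | exact: (N1 c').2 | exact: (N2 c').1 | exact: (N2 c').2].
  + rewrite negb_or in hn; case/andP: hn => n1 n2.
    exact: norm1.
- rewrite Hpsibr !Hpsiv //; apply: diag_glbr => s t.
  + apply: (@diag_mulrc _ _ i); [apply: rsupp_part; apply: rsupp_E | apply: csupp_part; apply: csupp_E].
  + apply: (@diag_mulrc _ _ j); [apply: rsupp_part; apply: rsupp_E | apply: csupp_part; apply: csupp_E].
Qed.


Lemma HhBr s t y y' : Hh s y -> Hh t y' -> Hh (s (+) t) (br y y').
Proof.
case=> gy ny dy [gy' ny' dy']; split.
- exact: brdeg gy gy'.
- move=> k l c hkl; have gz := Hdeg k l c hkl; split.
  + rewrite (jac gy gy' gz).
    have [d ->] := (ny' k l c hkl).1. have [e ->] := (ny k l c hkl).1.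
    have [d' ->] := (ny k l d hkl).1. have [e' ->] := (ny' k l e hkl).1.
    solveV hkl.
  + rewrite (jacD gz gy gy').
    have [d ->] := (ny k l c hkl).2. have [d' ->] := (ny' k l d hkl).2.
    have [e ->] := (ny' k l c hkl).2. have [e' ->] := (ny k l e hkl).1.
    solveV hkl.
- rewrite Hpsibr; apply: diag_glbr => a b; apply: diag_mul; apply: diag_part => //.
Qed.

Lemma Hh_lin s c y y' : Hh s y -> Hh s y' -> Hh s (c *: y + y').
Proof.
case=> gy ny dy [gy' ny' dy']; split.
- exact: Glin.
- move=> k l c' hkl.
  case: (ny k l c' hkl) => [[d1 e1] [d2 e2]]; case: (ny' k l c' hkl) => [[d3 e3] [d4 e4]].
  rewrite brL brR e1 e2 e3 e4; split; solveV hkl.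
- by move=> i j h; rewrite psiE dy // dy' // scaler0 addr0.
Qed.

Lemma Hh0 s : Hh s 0.
Proof.
split; first exact: G0.
- by move=> k l c h; rewrite br0l br0r; split; exact: inV0.
- rewrite psi0; exact: diag0.
Qed.

Definition Hs y := exists y0 y1, [/\ Hh false y0, Hh true y1 & y = y0 + y1].
Lemma Hs0 : Hs 0.
Proof. by exists 0, 0; split; [exact: Hh0 | exact: Hh0 | rewrite addr0]. Qed.
Lemma Hs_lin c y y' : Hs y -> Hs y' -> Hs (c *: y + y').
Proof.
move=> [a [b [ha hb ->]]] [a' [b' [ha' hb' ->]]].
exists (c *: a + a'), (c *: b + b'); split; try exact: Hh_lin.
by rewrite scalerDr addrACA.
Qed.
Lemma HsD y y' : Hs y -> Hs y' -> Hs (y + y').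
Proof. by move=> a b; have := Hs_lin 1 y y' a b; rewrite scale1r. Qed.
Lemma HsHh s y : Hh s y -> Hs y.
Proof.
case: s => h; [exists 0, y | exists y, 0]; split => //; try exact: Hh0.
- by rewrite add0r.
- by rewrite addr0.
Qed.
Lemma HsBr y y' : Hs y -> Hs y' -> Hs (br y y').
Proof.
move=> [a [b [ha hb ->]]] [a' [b' [ha' hb' ->]]].
rewrite !brDl !brDr.
apply: HsD; apply: HsD; apply: HsHh; apply: HhBr; eassumption.
Qed.
Lemma Hs_norm y k l c : Hs y -> k != l ->
  inV k l (br y (v k l c)) /\ inV k l (br (v k l c) y).
Proof.
move=> [a [b [[_ na _] [_ nb _] ->]]] hkl; rewrite brDl brDr.
case: (na k l c hkl) => [[d1 e1] [d2 e2]]; case: (nb k l c hkl) => [[d3 e3] [d4 e4]].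
rewrite e1 e2 e3 e4; split; solveV hkl.
Qed.
Lemma Hs_diag y : Hs y -> diag (psi y).
Proof. by move=> [a [b [[_ _ da] [_ _ db] ->]]]; rewrite psiD; exact: diagD. Qed.

Definition Q x := Hs (x - U (psi x)).
Lemma Q_lin c x y : Q x -> Q y -> Q (c *: x + y).
Proof.
rewrite /Q Hpsilin U_lin => hx hy.
have -> : c *: x + y - (c *: U (psi x) + U (psi y)) =
          c *: (x - U (psi x)) + (y - U (psi y)) by rewrite scalerBr addrACA -opprD.
exact: Hs_lin.
Qed.
Lemma Q0 : Q 0.
Proof. by rewrite /Q psi0 U_diag ?subr0; [exact: Hs0 | exact: diag0]. Qed.
Lemma QD x y : Q x -> Q y -> Q (x + y).
Proof. by move=> a b; have := Q_lin 1 x y a b; rewrite scale1r. Qed.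
Lemma Q_sum (I : finType) (P : pred I) (F : I -> L) :
  (forall i, P i -> Q (F i)) -> Q (\sum_(i | P i) F i).
Proof. by move=> h; apply: big_ind => //; [exact: Q0 | exact: QD]. Qed.
Lemma Qv k l d : k != l -> Q (v k l d).
Proof. by move=> h; rewrite /Q Hpsiv // U_E // subrr; exact: Hs0. Qed.
Lemma QHs h : Hs h -> Q h.
Proof. by move=> hh; rewrite /Q U_diag ?subr0 //; exact: Hs_diag. Qed.
Lemma QV k l x : k != l -> inV k l x -> Q x.
Proof. by move=> h [d ->]; exact: Qv. Qed.

Lemma Q_vv i j k l a b : i != j -> k != l -> Q (br (v i j a) (v k l b)).
Proof.
move=> hij hkl.
case: (boolP ((k == j) && (l == i))) => [/andP[/eqP ek /eqP el] | hn].
  by subst; apply: QHs; apply: (HsHh false); apply: hij_Hh.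
case: (eqVneq j k) => [ejk | hjk].
  subst k; rewrite eqxx /= in hn; symneq.
  by rewrite R3 //; exact: Qv.
case: (eqVneq i l) => [eil | hil].
  subst l; rewrite eqxx andbT in hn.
  rewrite R4 //; apply: (QV _ _ _ hn); solveV hn.
by rewrite R2 //; exact: Q0.
Qed.

Lemma Qbr' X Y h h' : Hs h -> Hs h' -> Q (br (U X + h) (U Y + h')).
Proof.
move=> hh hh'; rewrite brDl !brDr; apply: QD; apply: QD.
- rewrite /U br_sumL; apply: Q_sum => p hp; rewrite br_sumR; apply: Q_sum => q hq.
  exact: Q_vv.
- rewrite /U br_sumL; apply: Q_sum => p hp; apply: (QV _ _ _ hp); exact: (Hs_norm _ _ _ _ hh' hp).2.
- rewrite /U br_sumR; apply: Q_sum => p hp; apply: (QV _ _ _ hp); exact: (Hs_norm _ _ _ _ hh hp).1.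
- exact: QHs (HsBr _ _ hh hh').
Qed.

Lemma Qbr x y : Q x -> Q y -> Q (br x y).
Proof. by move=> hx hy; have := Qbr' (psi x) (psi y) _ _ hx hy; rewrite !subrKC. Qed.


Definition Z s y := G s y /\
  forall k l c, k != l -> br y (v k l c) = 0 /\ br (v k l c) y = 0.

Lemma HhZ s y : Hh s y -> psi y = 0 -> Z s y.
Proof.
case=> gy ny _ hp; split => // k l c hkl.
have kill : forall x d, x = v k l d -> psi x = 0 -> x = 0.
  move=> x d -> ; rewrite Hpsiv // => /(congr1 (fun M : 'M[A]_(m+n) => M k l)).
  by rewrite !mxE !eqxx /= => ->; exact: v0.
case: (ny k l c hkl) => [[d1 e1] [d2 e2]]; split.
- by apply: (kill _ _ e1); rewrite Hpsibr hp glbr0l.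
- by apply: (kill _ _ e2); rewrite Hpsibr hp glbr0r.
Qed.

Lemma diag_homT X : diag X -> mx_homog true X -> X = 0.
Proof.
move=> hd hh; apply/matrixP => k l; rewrite -hh mxE [RHS]mxE.
case: (eqVneq k l) => [->|h]; first by rewrite /tau addbb.
by rewrite hd //; case: ifP.
Qed.

Lemma genH (P : L -> Prop) : P 0 -> (forall c x y, P x -> P y -> P (c *: x + y)) ->
  (forall i j a, i != j -> P (v i j a)) ->
  (forall s t x y, G s x -> G t y -> P x -> P y -> P (br x y)) -> forall x, P x.
Proof.
move=> P0 Pl Pv Pb.
have PD : forall x y, P x -> P y -> P (x + y).
  by move=> x y a b; have := Pl 1 x y a b; rewrite scale1r.
suff R : forall x x0 x1, G false x0 -> G true x1 -> x = x0 + x1 -> P x0 /\ P x1.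
  move=> x; have [x0 [x1 [g0 g1 e]]] := Gdec x.
  have [] := R x x0 x1 g0 g1 e; rewrite e; exact: PD.
apply: Hgen.
- move=> x0 x1 g0 g1 e.
  by have [<- <-] := Guniq (G0 false) (G0 true) g0 g1 (etrans (addr0 0) e).
- move=> c x y Rx Ry x0 x1 g0 g1 e.
  have [a0 [a1 [ga0 ga1 ea]]] := Gdec x; have [b0 [b1 [gb0 gb1 eb]]] := Gdec y.
  have [pa0 pa1] := Rx a0 a1 ga0 ga1 ea; have [pb0 pb1] := Ry b0 b1 gb0 gb1 eb.
  have e2 : (c *: a0 + b0) + (c *: a1 + b1) = x0 + x1.
    by rewrite -e ea eb scalerDr addrACA.
  have [<- <-] := Guniq (Glin c ga0 gb0) (Glin c ga1 gb1) g0 g1 e2.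
  by split; apply: Pl.
- move=> x y Rx Ry x0 x1 g0 g1 e.
  have [a0 [a1 [ga0 ga1 ea]]] := Gdec x; have [b0 [b1 [gb0 gb1 eb]]] := Gdec y.
  have [pa0 pa1] := Rx a0 a1 ga0 ga1 ea; have [pb0 pb1] := Ry b0 b1 gb0 gb1 eb.
  have e2 : (br a0 b0 + br a1 b1) + (br a0 b1 + br a1 b0) = x0 + x1.
    by rewrite -e ea eb !brDl !brDr addrACA [br a1 b1 + _]addrC.
  have g0' : G false (br a0 b0 + br a1 b1) by apply: GD; [exact: (brdeg ga0 gb0) | exact: (brdeg ga1 gb1)].
  have g1' : G true (br a0 b1 + br a1 b0) by apply: GD; [exact: (brdeg ga0 gb1) | exact: (brdeg ga1 gb0)].
  have [<- <-] := Guniq g0' g1' g0 g1 e2.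
  split; apply: PD; apply: Pb; eassumption.
- move=> z [i [j [a [hij ->]]]] x0 x1 g0 g1 e.
  have pv := Pv i j a hij; move: (Hdeg i j a hij); case: (tau i j) => gv.
  + by have [<- <-] := Guniq (G0 false) gv g0 g1 (etrans (add0r _) e).
  + by have [<- <-] := Guniq gv (G0 true) g0 g1 (etrans (addr0 _) e).
Qed.

Lemma central : forall x s y, Z s y -> br y x = 0 /\ br x y = 0.
Proof.
apply: (@genH (fun x => forall s y, Z s y -> br y x = 0 /\ br x y = 0)).
- by move=> s y _; rewrite br0r br0l.
- move=> c x x' hx hx' s y zy; have [a b] := hx s y zy; have [a' b'] := hx' s y zy.
  by rewrite brR brL a b a' b' scaler0 addr0.
- by move=> i j a hij s y [_ h]; exact: (h i j a hij).
- move=> s t x x' gx gx' hx hx' u y zy; have gy := zy.1; split.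
  + by rewrite (jacD gy gx gx') (hx u y zy).1 (hx' u y zy).1 br0l br0r scaler0 addr0.
  + by rewrite (jac gx gx' gy) (hx' u y zy).2 (hx u y zy).2 !br0r scaler0 subr0.
Qed.

Lemma main t x : psi t = 0 -> br t x = 0 /\ br x t = 0.
Proof.
move=> pt.
have Qall : forall x, Q x.
  apply: Hgen; [exact: Q0 | exact: Q_lin | exact: Qbr | ].
  by move=> z [i [j [a [hij ->]]]]; exact: Qv.
have := Qall t; rewrite /Q pt U_diag ?subr0; last exact: diag0.
case=> [y0 [y1 [h0 h1 et]]].
have p1 : psi y1 = 0.
  apply: diag_homT; first by case: h1.
  by case: h1 => g _ _; exact: Hpsihom g.
have p0 : psi y0 = 0 by move: pt; rewrite et psiD p1 addr0.
have z0 := HhZ _ _ h0 p0; have z1 := HhZ _ _ h1 p1.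
have [a0 b0] := central x _ _ z0; have [a1 b1] := central x _ _ z1.
by rewrite et brDl brDr a0 a1 b0 b1 addr0.
Qed.

End Main.
(* Stated for every Leibniz superalgebra L generated by elements v_ij(a)
   satisfying the Steinberg relations (1)-(4), together with a
   homomorphism psi : L -> gl(m,n,A) with psi(v_ij(a)) = E_ij(a).
   stl(m,n,A) is such an L. *)
Theorem theorem3p1 (K : fieldType) (A : algType K) (m n : nat)
  (L : lmodType K) (G : bool -> L -> Prop) (br : L -> L -> L)
  (v : 'I_(m + n) -> 'I_(m + n) -> A -> L)
  (psi : L -> 'M[A]_(m + n)) :
  (2%:R : K) != 0 -> (3%:R : K) != 0 ->
  (3 <= m + n)%N ->
  is_leibniz_superalgebra G br ->
  (* degrees and K-linearity of the generators *)
  (forall i j a, i != j -> G (tau i j) (v i j a)) ->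
  (forall i j (c : K) a b, i != j -> v i j (c *: a + b) = c *: v i j a + v i j b) ->
  (* Steinberg relations *)
  (forall i j k l a b, i != j -> k != l -> i != l -> j != k ->
     br (v i j a) (v k l b) = 0) ->
  (forall i j l a b, i != j -> j != l -> i != l ->
     br (v i j a) (v j l b) = v i l (a * b)) ->
  (forall i j k a b, i != j -> k != i -> j != k ->
     br (v i j a) (v k i b) = - (((-1) ^+ (tau i j && tau k i)) *: v k j (b * a))) ->
  (* L is generated by the v_ij(a) *)
  generated_by br (fun x => exists i j a, i != j /\ x = v i j a) ->
  (* psi is a homomorphism of Leibniz superalgebras with psi(v_ij(a)) = E_ij(a) *)
  (forall (c : K) x y, psi (c *: x + y) = mx_scale c (psi x) + psi y) ->
  (forall x y, psi (br x y) = glbr (psi x) (psi y)) ->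
  (forall s x, G s x -> mx_homog s (psi x)) ->
  (forall i j a, i != j -> psi (v i j a) = Emx i j a) ->
  (* conclusion: Ker psi is central *)
  forall t x, psi t = 0 -> br t x = 0 /\ br x t = 0.
Proof.
move=> _ _ h3 hl hdeg hv r2 r3 r4 hg hpl hpb hph hpv t x ht.
exact: (@main K A m n L G br v psi h3 hl hdeg hv r2 r3 r4 hg hpl hpb hph hpv t x ht).
Qed.
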